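(* Let $G_7$ be the graph on vertex set $\{0,1,\dots,6\}$ with edge set $\{01,12,23,34,45,56,60,03,04,13,14,63,64,25\}$. Then $\beta(G_7,\mathbf 1)=\alpha(G_7,\mathbf 1)=2$, where $\mathbf 1$ is the all-ones weight vector.
   Context: A realization of a graph $G$ on $n$ vertices is a tuple $(S_1,\dots,S_n)$ of Pauli strings (tensor products of matrices from $\{I,X,Y,Z\}$) of common length with $S_i,S_j$ anticommuting iff $i\sim j$ and commuting otherwise. $\beta(G,w)=\sup_\rho\sum_iw_i\operatorname{tr}(\rho S_i)^2$ over density matrices $\rho$ (independent of the realization); $\alpha(G,w)=\max\{\sum_{i\in I}w_i:I\text{ independent}\}$. (For instance, in vertex order $0,\dots,6$, the strings $Z_1,\ X_1X_2,\ Z_2,\ Y_1X_2X_3,\ Y_1Z_3,\ Z_1Y_2,\ X_1$ on three qubits, where subscripts indicate the qubit acted on, realize $G_7$.) *)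

(* Defs.v *)
From HB Require Import structures.
From mathcomp Require Import all_boot all_order all_algebra.
From mathcomp Require Import classical_sets reals.
From mathcomp Require Import complex.
Set Implicit Arguments. Unset Strict Implicit. Unset Printing Implicit Defensive.
Import Order.TTheory GRing.Theory Num.Theory.
Local Open Scope ring_scope.

Inductive pauli := pI | pX | pY | pZ.

Section Pauli.
Variable R : realType.
Local Notation C := R[i].

(* the single-qubit Pauli matrices; index 0 = |0>, 1 = |1> *)
Definition pauli_mx (p : pauli) : 'M[C]_2 :=
  \matrix_(a < 2, b < 2)
   match p with
   | pI => if a == b then 1 else 0
   | pX => if a == b then 0 else 1
   | pY => if a == b then 0 else
             (if (a : nat) == 0%N then - (Complex 0 1) else Complex 0 1)
   | pZ => if a == b then (if (a : nat) == 0%N then 1 else -1) else 0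
   end.

Definition bitk (k i : nat) : 'I_2 := inord (odd (i %/ 2 ^ k)).

(* the Pauli string s_0 (x) s_1 (x) ... (x) s_{n-1} acting on (C^2)^{(x) n},
   written out entrywise (qubit k <-> binary digit k of the basis index) *)
Definition pauli_string n (s : n.-tuple pauli) : 'M[C]_(2 ^ n) :=
  \matrix_(i < 2 ^ n, j < 2 ^ n)
    \prod_(k < n) pauli_mx (tnth s k) (bitk k i) (bitk k j).

Definition adjmx m (A : 'M[C]_m) : 'M[C]_m := (map_mx Num.conj A)^T.

Definition density m (rho : 'M[C]_m) : Prop :=
  [/\ adjmx rho = rho,
      forall v : 'cV[C]_m, 0 <= ((map_mx Num.conj v)^T *m rho *m v) 0 0
    & \tr rho = 1].

Definition realizes N n (G : rel 'I_N) (S : 'I_N -> n.-tuple pauli) : Prop :=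
  forall i j : 'I_N,
    if G i j then pauli_string (S i) *m pauli_string (S j)
                  = - (pauli_string (S j) *m pauli_string (S i))
    else pauli_string (S i) *m pauli_string (S j)
                  = pauli_string (S j) *m pauli_string (S i).

(* beta(G,w), computed through a realization S of G:
   sup over density matrices of sum_i w_i tr(rho S_i)^2
   (tr(rho S_i) is real for Hermitian rho, S_i; we take its real part) *)
Definition beta N n (S : 'I_N -> n.-tuple pauli) (w : 'I_N -> R) : R :=
  sup (fun x : R => exists rho : 'M[C]_(2 ^ n),
         density rho /\
         x = \sum_(i < N) w i * (complex.Re (\tr (rho *m pauli_string (S i)))) ^+ 2).

Definition indep N (G : rel 'I_N) (A : {set 'I_N}) : bool :=
  [forall i in A, forall j in A, ~~ G i j].

Definition alpha N (G : rel 'I_N) (w : 'I_N -> R) : R :=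
  \big[Num.max/0]_(A : {set 'I_N} | indep G A) \sum_(i in A) w i.

End Pauli.

Definition G7_edges : seq (nat * nat) :=
  [:: (0,1); (1,2); (2,3); (3,4); (4,5); (5,6); (6,0); (0,3); (0,4);
      (1,3); (1,4); (6,3); (6,4); (2,5)]%N.

Definition G7 : rel 'I_7 := fun i j =>
  ((val i, val j) \in G7_edges) || ((val j, val i) \in G7_edges).

(* the realization from the paper (qubits 1,2,3 <-> tuple positions 0,1,2):
   Z1, X1X2, Z2, Y1X2X3, Y1Z3, Z1Y2, X1 *)
Definition S7 (i : 'I_7) : 3.-tuple pauli :=
  match val i with
  | 0 => [tuple pZ; pI; pI]
  | 1 => [tuple pX; pX; pI]
  | 2 => [tuple pI; pZ; pI]
  | 3 => [tuple pY; pX; pX]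
  | 4 => [tuple pY; pI; pZ]
  | 5 => [tuple pZ; pY; pI]
  | _ => [tuple pX; pI; pI]
  end%N.

(* Main.v *)
Require Import Defs.
From HB Require Import structures.
From mathcomp Require Import all_boot all_order all_algebra.
From mathcomp Require Import classical_sets reals complex.
From mathcomp Require Import ring lra zify.
Import Order.TTheory GRing.Theory Num.Theory.
Local Open Scope ring_scope.


Section Gen.
Variable K : comNzRingType.

Lemma sum_pairs n (V : zmodType) (F : 'I_n -> 'I_n -> V) :
  \sum_(i < n) \sum_(j < n) F i j = \sum_(i < n) F i i + \sum_(i < n) \sum_(j < n | (i < j)%N) (F i j + F j i).
Proof.
have E1 : forall i : 'I_n, \sum_(j < n) F i j = F i i + \sum_(j < n | (i < j)%N) F i j + \sum_(j < n | (j < i)%N) F i j.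
  move=> i; rewrite (bigD1 i) //= [X in _ + X](bigID (fun j : 'I_n => (i < j)%N)) /= addrA.
  congr (_ + _ + _); apply: eq_bigl => j.
    by rewrite -(inj_eq val_inj) /=; apply/idP/idP; lia.
  by rewrite -(inj_eq val_inj) /=; apply/idP/idP; lia.
rewrite (eq_bigr _ (fun i _ => E1 i)) !big_split /= -addrA; congr (_ + _).
under [RHS]eq_bigr => i _ do rewrite big_split /=.
rewrite big_split /=; congr (_ + _).
rewrite (eq_bigr (fun i : 'I_n => \sum_(j < n) (if (j < i)%N then F i j else 0))); last by move=> i _; rewrite big_mkcond.
rewrite exchange_big /=; apply: eq_bigr => i _; rewrite [RHS]big_mkcond /=.
by apply: eq_bigr => j _.
Qed.

Lemma sq_sum n m (M : 'I_n -> 'M[K]_m) (a : 'I_n -> K) (sig : 'I_n -> 'I_n -> bool) :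
  (forall i, M i *m M i = 1%:M) ->
  (forall i j, M j *m M i = (if sig i j then -1 else 1) *: (M i *m M j)) ->
  (\sum_(i < n) a i *: M i) *m (\sum_(i < n) a i *: M i) =
  (\sum_(i < n) a i ^+ 2) *: 1%:M +
  2%:R *: \sum_(i < n) \sum_(j < n | (i < j)%N && ~~ sig i j) (a i * a j) *: (M i *m M j).
Proof.
move=> Hsq Hc.
rewrite mulmx_suml.
under eq_bigr => i _ do rewrite mulmx_sumr.
under eq_bigr => i _ do under eq_bigr => j _ do rewrite -scalemxAl -scalemxAr scalerA.
rewrite sum_pairs; congr (_ + _).
  by rewrite scaler_suml; apply: eq_bigr => i _; rewrite Hsq expr2.
rewrite scaler_sumr; apply: eq_bigr => i _.
rewrite scaler_sumr [RHS]big_mkcondr /=; apply: eq_bigr => j _.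
rewrite (Hc i j) scalerA; case: (sig i j) => /=; rewrite scalerA -scalerDl.
  by rewrite (_ : _ + _ = 0) ?scale0r //; ring.
by congr (_ *: _); ring.
Qed.
End Gen.

Section Poly.
Variable R : realType.

Lemma core (u0 p r A B k g y : R) :
  0 <= u0 -> 0 <= p -> 0 <= r -> 0 <= A -> 0 <= B -> k <= A * B ->
  g ^+ 2 = p * r -> y ^+ 2 <= k ->
  0 <= (u0 - (p - A) - (r - B)) ^+ 2 - 4 * ((p - A) * (r - B)) + 4 * (p * r + k - 2 * g * y).
Proof.
move=> h0 hp hr hA hB kAB hg hy.
have hk : (g - y) ^+ 2 <= p * r + k - 2 * g * y.
  have -> : (g - y) ^+ 2 = g ^+ 2 - 2 * g * y + y ^+ 2 by ring.
  rewrite hg; lra.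
have [hD|hD] := lerP ((p - A) * (r - B)) 0.
  have : 0 <= (u0 - (p - A) - (r - B)) ^+ 2 by exact: sqr_ge0.
  have : 0 <= (g - y) ^+ 2 by exact: sqr_ge0.
  lra.
have [hD1|hD1] := ltrP (p - A) 0.
  have hD2 : r - B < 0 by nra.
  have e3 : (A - p + B - r) ^+ 2 <= (u0 - (p - A) - (r - B)) ^+ 2 by nra.
  have : 0 <= (g - y) ^+ 2 by exact: sqr_ge0.
  have : 0 <= (A - p - (B - r)) ^+ 2 by exact: sqr_ge0.
  have e4 : (A - p + B - r) ^+ 2 - 4 * ((p - A) * (r - B)) = (A - p - (B - r)) ^+ 2 by ring.
  lra.
have hD1' : 0 < p - A.
  rewrite lt_neqAle eq_sym hD1 andbT; apply: contraTneq hD => ->; rewrite mul0r; lra.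
have hD2 : 0 < r - B by nra.
pose m := Num.sqrt (A * B).
have m0 : 0 <= m by exact: sqrtr_ge0.
have mm : m ^+ 2 = A * B by rewrite sqr_sqrtr //; nra.
pose G := `|g|; pose Y := `|y|.
have G0 : 0 <= G by exact: normr_ge0.
have Y0 : 0 <= Y by exact: normr_ge0.
have GG : G ^+ 2 = p * r by rewrite /G real_normK ?num_real.
have YY : Y ^+ 2 <= k by rewrite /Y real_normK ?num_real.
have Ym : Y <= m by nra.
have Gm : m <= G by nra.
have e1 : (G - m) ^+ 2 <= (G - Y) ^+ 2 by nra.
have e2 : (G - Y) ^+ 2 <= (g - y) ^+ 2.
  rewrite /G /Y !sqrrB !real_normK ?num_real //.
  have : g * y <= `|g| * `|y| by rewrite -normrM ler_norm.
  lra.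
have e3 : 2 * G * m <= p * B + A * r.
  have s0 : 0 <= p * B + A * r by nra.
  have : (2 * G * m) ^+ 2 <= (p * B + A * r) ^+ 2.
    have -> : (2 * G * m) ^+ 2 = 4 * (G ^+ 2) * (m ^+ 2) by ring.
    rewrite GG mm.
    have : 0 <= (p * B - A * r) ^+ 2 by exact: sqr_ge0.
    have -> : (p * B + A * r) ^+ 2 = (p * B - A * r) ^+ 2 + 4 * (p * r) * (A * B) by ring.
    lra.
  nra.
have e5 : (p - A) * (r - B) <= (G - m) ^+ 2.
  have -> : (G - m) ^+ 2 = G ^+ 2 - 2 * G * m + m ^+ 2 by ring.
  rewrite GG mm.
  have -> : (p - A) * (r - B) = p * r - p * B - A * r + A * B by ring.
  lra.
have : 0 <= (u0 - (p - A) - (r - B)) ^+ 2 by exact: sqr_ge0.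
lra.
Qed.

Lemma polyU (u0 u1 u2 u3 u4 u5 u6 g y : R) :
  0 <= u0 -> 0 <= u1 -> 0 <= u2 -> 0 <= u3 -> 0 <= u4 -> 0 <= u5 -> 0 <= u6 ->
  g ^+ 2 = u2 * u5 -> y ^+ 2 <= u1 * u4 + u3 * u4 + u3 * u6 ->
  4 * ((u0*u2+u0*u5+u1*u5+u1*u6+u2*u4+u2*u6+u3*u5) + 2 * g * y)
    <= (u0+u1+u2+u3+u4+u5+u6) ^+ 2.
Proof.
move=> h0 h1 h2 h3 h4 h5 h6 hg hy.
have := @core u0 u2 u5 (u4 + u6) (u1 + u3) (u1 * u4 + u3 * u4 + u3 * u6) g y h0 h2 h5.
have kAB : u1 * u4 + u3 * u4 + u3 * u6 <= (u4 + u6) * (u1 + u3) by nra.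
move=> /(_ (addr_ge0 h4 h6) (addr_ge0 h1 h3) kAB hg hy) H.
rewrite -subr_ge0.
have -> : (u0+u1+u2+u3+u4+u5+u6) ^+ 2 -
   4 * ((u0*u2+u0*u5+u1*u5+u1*u6+u2*u4+u2*u6+u3*u5) + 2 * g * y) =
   (u0 - (u2 - (u4 + u6)) - (u5 - (u1 + u3))) ^+ 2 - 4 * ((u2 - (u4 + u6)) * (u5 - (u1 + u3))) +
   4 * (u2 * u5 + (u1 * u4 + u3 * u4 + u3 * u6) - 2 * g * y) by ring.
exact: H.
Qed.
End Poly.

Section Pa.
Variable R : realType.
Local Notation C := R[i].
Local Notation Re := complex.Re.

Lemma conj_real (x : R) : Num.conj (Complex x 0 : C) = Complex x 0.
Proof. by apply: conj_Creal; rewrite complex_real. Qed.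
Lemma conjE (z : C) : Num.conj z = conjc z.
Proof.
case: z => a b.
have -> : (Complex a b : C) = Complex a 0 + 'i%C * Complex b 0.
  by rewrite -[RHS]/(Complex _ _); congr Complex; ring.
rewrite rmorphD rmorphM /=.
rewrite !conj_real complexiE conjCi -complexiE.
rewrite -[RHS]/(Complex _ _) -[LHS]/(Complex _ _).
congr Complex; ring.
Qed.


Lemma cE (a b c d : R) : (Complex a b = Complex c d :> C) <-> (a = c /\ b = d).
Proof. by split=> [[-> ->]|[-> ->]]. Qed.

Ltac cring := rewrite -[LHS]/(Complex _ _) -[RHS]/(Complex _ _); apply/cE; split; ring.

Local Notation P := (pauli_mx R).

Lemma sum2 (F : 'I_2 -> C) : \sum_(a < 2) F a = F ord0 + F ord_max.
Proof. by rewrite !big_ord_recl big_ord0 addr0; congr (_ + F _); apply: val_inj. Qed.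

Ltac ord2 i := case: i => [[|[|//]] ?].

Lemma P_sq a : P a *m P a = 1%:M.
Proof.
apply/matrixP => i j; rewrite !mxE sum2 !mxE.
by case: a; ord2 i; ord2 j; cring.
Qed.

Definition anti (a b : pauli) : bool :=
  match a, b with
  | pI, _ | _, pI => false
  | pX, pX | pY, pY | pZ, pZ => false
  | _, _ => true
  end.

Lemma P_comm a b : P a *m P b = (if anti a b then -1 else 1) *: (P b *m P a).
Proof.
apply/matrixP => i j; rewrite !mxE !sum2 !mxE.
by case: a; case: b; ord2 i; ord2 j; cring.
Qed.




Lemma bitkE k i : bitk k i = if odd (i %/ 2 ^ k) then ord_max else ord0.
Proof. by apply: val_inj; rewrite /= inordK; case: odd. Qed.

Definition T3 (A B D : 'M[C]_2) : 'M[C]_(2 ^ 3) :=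
  \matrix_(i, j) (A (bitk 0 i) (bitk 0 j) * (B (bitk 1 i) (bitk 1 j) * D (bitk 2 i) (bitk 2 j))).

Lemma T3M A B D A' B' D' : T3 A B D *m T3 A' B' D' = T3 (A *m A') (B *m B') (D *m D').
Proof.
apply/matrixP => i j; rewrite !mxE !sum2.
rewrite !big_ord_recl big_ord0 !mxE.
rewrite !bitkE /=.
ring.
Qed.

Lemma ps_T3 (s : 3.-tuple pauli) : pauli_string R s =
  T3 (pauli_mx R (tnth s ord0)) (pauli_mx R (tnth s (lift ord0 ord0)))
     (pauli_mx R (tnth s (lift ord0 (lift ord0 ord0)))).
Proof.
apply/matrixP => i j; rewrite mxE [RHS]mxE !big_ord_recl big_ord0 mulr1 //.
Qed.

Lemma T3Z a b c A B D : T3 (a *: A) (b *: B) (c *: D) = (a * b * c) *: T3 A B D.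
Proof. apply/matrixP => i j; rewrite !mxE; ring. Qed.

Lemma T3_1 : T3 1%:M 1%:M 1%:M = 1%:M.
Proof.
apply/matrixP => i j; rewrite !mxE !bitkE.
case: i => [[|[|[|[|[|[|[|[|//]]]]]]]] ?]; case: j => [[|[|[|[|[|[|[|[|//]]]]]]]] ?] /=;
  by rewrite ?mulr1n ?mulr0n ?mulr1 ?mul0r ?mulr0.
Qed.

Definition adjmx' m (A : 'M[C]_m) : 'M[C]_m := (map_mx Num.conj A)^T.

Lemma T3_adj A B D : adjmx (T3 A B D) = T3 (adjmx A) (adjmx B) (adjmx D).
Proof. by apply/matrixP => i j; rewrite !mxE !rmorphM. Qed.

Lemma P_herm a : adjmx (P a) = P a.
Proof.
apply/matrixP => i j; rewrite !mxE conjE.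
by case: a; ord2 i; ord2 j; cring.
Qed.

Definition anti3 (s t : 3.-tuple pauli) : bool :=
  anti (tnth s ord0) (tnth t ord0) (+) anti (tnth s (lift ord0 ord0)) (tnth t (lift ord0 ord0))
  (+) anti (tnth s (lift ord0 (lift ord0 ord0))) (tnth t (lift ord0 (lift ord0 ord0))).

Lemma ps_comm s t : pauli_string R s *m pauli_string R t =
  (if anti3 s t then -1 else 1) *: (pauli_string R t *m pauli_string R s).
Proof.
rewrite !ps_T3 !T3M (P_comm (tnth s ord0)) (P_comm (tnth s (lift ord0 ord0))).
rewrite (P_comm (tnth s (lift ord0 (lift ord0 ord0)))) T3Z /anti3.
by case: anti; case: anti; case: anti; rewrite /=; congr (_ *: _); ring.
Qed.

Lemma ps_sq (s : 3.-tuple pauli) : pauli_string R s *m pauli_string R s = 1%:M.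
Proof. by rewrite ps_T3 T3M !P_sq T3_1. Qed.

Lemma ps_herm (s : 3.-tuple pauli) : adjmx (pauli_string R s) = pauli_string R s.
Proof. by rewrite ps_T3 T3_adj !P_herm. Qed.

Lemma G7_anti (i j : 'I_7) : G7 i j = anti3 (S7 i) (S7 j).
Proof.
by case: i => [[|[|[|[|[|[|[|//]]]]]]] ?]; case: j => [[|[|[|[|[|[|[|//]]]]]]] ?].
Qed.

Lemma G7_sym (i j : 'I_7) : G7 i j = G7 j i.
Proof. by rewrite /G7 orbC. Qed.

Lemma real7 : realizes R G7 S7.
Proof.
move=> i j; rewrite ps_comm -G7_anti.
by case: (G7 i j); rewrite ?scaleN1r ?scale1r.
Qed.



Lemma ReD (z w : C) : Re (z + w) = Re z + Re w. Proof. by case: z; case: w. Qed.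
Lemma ReN (z : C) : Re (- z) = - Re z. Proof. by case: z. Qed.
Lemma ReB (z w : C) : Re (z - w) = Re z - Re w. Proof. by rewrite ReD ReN. Qed.
Lemma Re0 : Re (0 : C) = 0. Proof. by []. Qed.
Lemma ReMr (x : R) (z : C) : Re (Complex x 0 * z) = x * Re z.
Proof. case: z => a b /=; ring. Qed.
Lemma Re_sum I (r : seq I) (P : pred I) (F : I -> C) :
  Re (\sum_(i <- r | P i) F i) = \sum_(i <- r | P i) Re (F i).
Proof. by apply: (big_morph _ ReD Re0). Qed.

Lemma tr_psd m (rho : 'M[C]_m) (A : 'M[C]_m) : density rho ->
  0 <= Re (\tr (rho *m (adjmx A *m A))).
Proof.
case=> _ hpsd _.
rewrite mulmxA mxtrace_mulC mulmxA.
have E : forall k, (A *m rho *m adjmx A) k k =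
   ((map_mx Num.conj (\col_l Num.conj (A k l)))^T *m rho *m (\col_l Num.conj (A k l))) 0 0.
  move=> k; rewrite !mxE; apply: eq_bigr => l _; rewrite !mxE; congr (_ * _).
  by apply: eq_bigr => p _; rewrite !mxE conjCK.
have : 0 <= \tr (A *m rho *m adjmx A).
  by rewrite /mxtrace; apply: sumr_ge0 => k _; rewrite E.
by rewrite lecE => /andP [_].
Qed.

Lemma var_ineq m (rho : 'M[C]_m) (M : 'M[C]_m) : density rho -> adjmx M = M ->
  (Re (\tr (rho *m M))) ^+ 2 <= Re (\tr (rho *m (M *m M))).
Proof.
move=> drho hM; set t := Re (\tr (rho *m M)).
have htr : Re (\tr rho) = 1 by case: drho => _ _ ->.
pose A := M - (Complex t 0 : C)%:M.
have hA : adjmx A = A.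
  apply/matrixP => i j; move/matrixP: hM => /(_ i j); rewrite !mxE => <-.
  rewrite rmorphB rmorphMn; congr (_ - _ *+ _); [exact: conj_real | by rewrite eq_sym].
have := tr_psd _ _ A drho; rewrite hA /A.
rewrite mulmxBl !mulmxBr mul_scalar_mx mul_mx_scalar mul_scalar_mx -!scalemxAr mul_mx_scalar.
rewrite !linearB /= !linearZ /= !ReMr htr -/t.
move=> h; nra.
Qed.

End Pa.



Section Gen2.
Variable K : comNzRingType.
Definition sgn (b : bool) : K := if b then -1 else 1.
Lemma sgnM a b : sgn a * sgn b = sgn (a (+) b).
Proof. by case: a; case: b; rewrite /sgn /= ?mulr1 ?mul1r ?mulrNN ?mulr1. Qed.

Lemma prod4 m (A B D E : 'M[K]_m) (al be ga de : K) :
  A *m D = al *: (D *m A) -> A *m E = be *: (E *m A) ->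
  B *m D = ga *: (D *m B) -> B *m E = de *: (E *m B) ->
  (A *m B) *m (D *m E) = (al * be * ga * de) *: ((D *m E) *m (A *m B)).
Proof.
move=> hAD hAE hBD hBE.
have e1 : A *m B *m (D *m E) = A *m (B *m D) *m E by rewrite !mulmxA.
rewrite e1 hBD -scalemxAr -scalemxAl.
have e2 : A *m (D *m B) *m E = (A *m D) *m (B *m E) by rewrite !mulmxA.
rewrite e2 hAD hBE -scalemxAl -scalemxAr !scalerA.
have e3 : D *m A *m (E *m B) = D *m (A *m E) *m B by rewrite !mulmxA.
rewrite e3 hAE -scalemxAr -scalemxAl scalerA !mulmxA.
by congr (_ *: _); ring.
Qed.
End Gen2.
Arguments prod4 {K m A B D E al be ga de}.

Section Main.
Variable R : realType.
Local Notation C := R[i].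
Local Notation Re := complex.Re.

Definition S7n (n : nat) : 3.-tuple pauli :=
  match n with
  | 0 => [tuple pZ; pI; pI]
  | 1 => [tuple pX; pX; pI]
  | 2 => [tuple pI; pZ; pI]
  | 3 => [tuple pY; pX; pX]
  | 4 => [tuple pY; pI; pZ]
  | 5 => [tuple pZ; pY; pI]
  | _ => [tuple pX; pI; pI]
  end%N.

Definition Sn (n : nat) : 'M[C]_(2 ^ 3) := pauli_string R (S7n n).

Arguments Sn : simpl never.
Lemma SnE (i : 'I_7) : pauli_string R (S7 i) = Sn i.
Proof. by []. Qed.

Lemma Sn_sq n : Sn n *m Sn n = 1%:M.
Proof. exact: ps_sq. Qed.
Lemma Sn_herm n : adjmx (Sn n) = Sn n.
Proof. exact: ps_herm. Qed.

Lemma Sn_rel (i j : 'I_7) : Sn j *m Sn i = sgn C (G7 i j) *: (Sn i *m Sn j).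
Proof.
rewrite /Sn ps_comm (_ : anti3 (S7n j) (S7n i) = G7 i j) //.
by rewrite G7_sym G7_anti.
Qed.


Definition ea (e : nat) : 'I_7 :=
  match e with 0 => @Ordinal 7 0 isT | 1 => @Ordinal 7 0 isT | 2 => @Ordinal 7 1 isT
  | 3 => @Ordinal 7 1 isT | 4 => @Ordinal 7 2 isT | 5 => @Ordinal 7 2 isT | _ => @Ordinal 7 3 isT end.
Definition eb (e : nat) : 'I_7 :=
  match e with 0 => @Ordinal 7 2 isT | 1 => @Ordinal 7 5 isT | 2 => @Ordinal 7 5 isT
  | 3 => @Ordinal 7 6 isT | 4 => @Ordinal 7 4 isT | 5 => @Ordinal 7 6 isT | _ => @Ordinal 7 5 isT end.

Definition Tn e := Sn (ea e) *m Sn (eb e).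
Arguments Tn : simpl never.

Lemma Tn_sq e : Tn e *m Tn e = 1%:M.
Proof.
have h : G7 (ea e) (eb e) = false by case: e => [|[|[|[|[|[|e]]]]]].
rewrite /Tn -mulmxA (mulmxA (Sn (eb e))) Sn_rel h /sgn scale1r.
by rewrite !mulmxA Sn_sq mul1mx Sn_sq.
Qed.

Definition sigT e f := G7 (ea e) (ea f) (+) G7 (eb e) (ea f) (+) G7 (ea e) (eb f) (+) G7 (eb e) (eb f).

Lemma Tn_rel e f : Tn f *m Tn e = sgn C (sigT e f) *: (Tn e *m Tn f).
Proof.
rewrite /Tn (prod4 (Sn_rel _ _) (Sn_rel _ _) (Sn_rel _ _) (Sn_rel _ _)).
by rewrite !sgnM.
Qed.

Definition rc (r : R) : C := Complex r 0.
Lemma rcM a b : rc a * rc b = rc (a * b).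
Proof. by rewrite /rc -[LHS]/(Complex _ _); congr Complex; ring. Qed.
Lemma rcD a b : rc a + rc b = rc (a + b).
Proof. by rewrite /rc -[LHS]/(Complex _ _); congr Complex; ring. Qed.
Lemma rc0 : rc 0 = 0. Proof. by []. Qed.
Lemma rc_sum n (F : 'I_n -> R) : \sum_(i < n) rc (F i) = rc (\sum_(i < n) F i).
Proof. by rewrite (big_morph rc (fun a b => esym (rcD a b)) rc0). Qed.
Lemma rcX a : rc a ^+ 2 = rc (a ^+ 2).
Proof. by rewrite !expr2 rcM. Qed.

Lemma expandN (V : zmodType) (Gf : nat -> nat -> V) :
  \sum_(i < 7) \sum_(j < 7 | (i < j)%N && ~~ G7 i j) Gf i j
  = \sum_(e < 7) Gf (ea e) (eb e).
Proof.
under eq_bigr => i _ do rewrite big_mkcond.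
rewrite !big_ord_recl !big_ord0 /=.
by rewrite ?addr0 ?add0r !addrA.
Qed.

Definition pa (a : nat) : nat := match a with 0 => 2 | 1 => 4 | _ => 5 end%N.
Definition pb (a : nat) : nat := match a with 0 => 4 | 1 => 6 | _ => 6 end%N.
Definition sigU (a b : nat) : bool :=
  sigT (pa a) (pa b) (+) sigT (pb a) (pa b) (+) sigT (pa a) (pb b) (+) sigT (pb a) (pb b).

Lemma sum3 (V : zmodType) (F : nat -> V) : \sum_(a < 3) F a = F 0%N + F 1%N + F 2%N.
Proof. by rewrite !big_ord_recl big_ord0 /= addr0 addrA. Qed.
Lemma sum7 (V : zmodType) (F : nat -> V) :
  \sum_(a < 7) F a = F 0%N + F 1%N + F 2%N + F 3%N + F 4%N + F 5%N + F 6%N.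
Proof. by rewrite !big_ord_recl big_ord0 /= addr0 !addrA. Qed.

Lemma expandT (V : zmodType) (Gf : nat -> nat -> V) :
  \sum_(i < 7) \sum_(j < 7 | (i < j)%N && ~~ sigT i j) Gf i j
  = Gf 2%N 4%N + Gf 4%N 6%N + Gf 5%N 6%N.
Proof.
under eq_bigr => i _ do rewrite big_mkcond.
rewrite !big_ord_recl !big_ord0 /=.
by rewrite ?addr0 ?add0r !addrA.
Qed.

Lemma expandU (V : zmodType) (Gf : nat -> nat -> V) :
  \sum_(i < 3) \sum_(j < 3 | (i < j)%N && ~~ sigU i j) Gf i j = 0.
Proof.
under eq_bigr => i _ do rewrite big_mkcond.
by rewrite !big_ord_recl !big_ord0 /= ?addr0.
Qed.


Definition Un a := Tn (pa a) *m Tn (pb a).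
Arguments Un : simpl never.

Lemma Tn_comm_pab a : Tn (pb a) *m Tn (pa a) = Tn (pa a) *m Tn (pb a).
Proof.
rewrite Tn_rel (_ : sigT (pa a) (pb a) = false) ?scale1r //.
by case: a => [|[|a]].
Qed.

Lemma Un_sq a : Un a *m Un a = 1%:M.
Proof.
rewrite /Un -mulmxA (mulmxA (Tn (pb a))) Tn_comm_pab.
have -> : Tn (pa a) *m (Tn (pa a) *m Tn (pb a) *m Tn (pb a)) =
  (Tn (pa a) *m Tn (pa a)) *m (Tn (pb a) *m Tn (pb a)) by rewrite !mulmxA.
by rewrite !Tn_sq mul1mx.
Qed.

Lemma Un_rel a b : Un b *m Un a = sgn C (sigU a b) *: (Un a *m Un b).
Proof.
rewrite /Un (prod4 (Tn_rel _ _) (Tn_rel _ _) (Tn_rel _ _) (Tn_rel _ _)).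
by rewrite !sgnM.
Qed.

Lemma adj_mul m (A B : 'M[C]_m) : adjmx (A *m B) = adjmx B *m adjmx A.
Proof. by rewrite /adjmx map_mxM trmx_mul. Qed.

Lemma adj_sum n m (c : 'I_n -> C) (M : 'I_n -> 'M[C]_m) :
  (forall i, Num.conj (c i) = c i) ->
  adjmx (\sum_(i < n) c i *: M i) = \sum_(i < n) c i *: adjmx (M i).
Proof.
move=> hc; apply/matrixP => i j; rewrite !mxE !summxE rmorph_sum.
by apply: eq_bigr => k _; rewrite !mxE rmorphM /= hc.
Qed.

Lemma conj_rc r : Num.conj (rc r) = rc r.
Proof. by apply: conj_Creal; rewrite complex_real. Qed.

Lemma Tn_herm e : adjmx (Tn e) = Tn e.
Proof.
rewrite /Tn adj_mul !Sn_herm Sn_rel (_ : G7 (ea e) (eb e) = false) ?scale1r //.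
by case: e => [|[|[|[|[|[|e]]]]]].
Qed.

Lemma Un_herm a : adjmx (Un a) = Un a.
Proof. by rewrite /Un adj_mul !Tn_herm Tn_comm_pab. Qed.

Arguments rc : simpl never.
Variable x : nat -> R.
Definition zv (a : nat) : R := match a with 0 => x 1 * x 4 | 1 => x 3 * x 4 | _ => x 3 * x 6 end.

Definition H := \sum_(k < 7) rc (x k) *: Sn k.
Definition N := \sum_(e < 7) rc (x (ea e) * x (eb e)) *: Tn e.
Definition Km := \sum_(a < 3) rc (zv a) *: Un a.

Lemma I1 : H *m H = rc (\sum_(k < 7) x k ^+ 2) *: 1%:M + 2%:R *: N.
Proof.
rewrite /H (@sq_sum C 7 _ (fun k : 'I_7 => Sn k) (fun k => rc (x k)) G7 (fun k => Sn_sq k) Sn_rel).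
congr (_ *: _ + _ *: _).
  by under eq_bigr do rewrite rcX; exact: rc_sum.
rewrite (expandN _ (fun a b => (rc (x a) * rc (x b)) *: (Sn a *m Sn b))).
by apply: eq_bigr => e _; rewrite rcM.
Qed.

Lemma I2 : N *m N = rc (\sum_(e < 7) (x (ea e) * x (eb e)) ^+ 2) *: 1%:M + 2%:R *: (rc (x 2 * x 5) *: Km).
Proof.
rewrite /N (@sq_sum C 7 _ (fun e : 'I_7 => Tn e) (fun e => rc (x (ea e) * x (eb e))) sigT (fun k => Tn_sq k) (fun e f => Tn_rel e f)).
congr (_ *: _ + _ *: _).
  by under eq_bigr do rewrite rcX; exact: rc_sum.
rewrite (expandT _ (fun a b => (rc (x (ea a) * x (eb a)) * rc (x (ea b) * x (eb b))) *: (Tn a *m Tn b))).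
rewrite /Km scaler_sumr (sum3 _ (fun a => rc (x 2 * x 5) *: (rc (zv a) *: Un a))) !scalerA !rcM.
by congr (_ *: _ + _ *: _ + _ *: _); congr rc; rewrite /zv /=; ring.
Qed.

Lemma I3 : Km *m Km = rc (\sum_(a < 3) zv a ^+ 2) *: 1%:M.
Proof.
rewrite /Km (@sq_sum C 3 _ (fun a : 'I_3 => Un a) (fun a => rc (zv a)) sigU (fun k => Un_sq k) (fun e f => Un_rel e f)).
rewrite (expandU _ (fun a b => (rc (zv a) * rc (zv b)) *: (Un a *m Un b))) scaler0 addr0.
by congr (_ *: _); under eq_bigr do rewrite rcX; exact: rc_sum.
Qed.

Lemma H_herm : adjmx H = H.
Proof. by rewrite /H adj_sum => [|k]; [under eq_bigr do rewrite Sn_herm | exact: conj_rc]. Qed.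
Lemma N_herm : adjmx N = N.
Proof. by rewrite /N adj_sum => [|k]; [under eq_bigr do rewrite Tn_herm | exact: conj_rc]. Qed.
Lemma Km_herm : adjmx Km = Km.
Proof. by rewrite /Km adj_sum => [|k]; [under eq_bigr do rewrite Un_herm | exact: conj_rc]. Qed.

End Main.
Arguments H {R}.
Arguments N {R}.
Arguments Km {R}.

Section Main2.
Variable R : realType.
Local Notation C := R[i].
Local Notation Re := complex.Re.
Local Notation rc := (rc R).
Variable rho : 'M[C]_(2 ^ 3).
Hypothesis drho : density rho.

Lemma htr : Re (\tr rho) = 1.
Proof. by case: drho => _ _ ->. Qed.

Lemma ReMrc (a : R) (z : C) : Re (rc a * z) = a * Re z.
Proof. case: z => u v; rewrite /rc /=; ring. Qed.

Lemma ReTrZ (a : R) (M : 'M[C]_(2 ^ 3)) : Re (\tr (rho *m (rc a *: M))) = a * Re (\tr (rho *m M)).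
Proof. by rewrite -scalemxAr mxtraceZ ReMrc. Qed.

Lemma ReTr_lin n (c : 'I_n -> R) (M : 'I_n -> 'M[C]_(2 ^ 3)) :
  Re (\tr (rho *m \sum_(i < n) rc (c i) *: M i)) = \sum_(i < n) c i * Re (\tr (rho *m M i)).
Proof.
have hD : forall A B : 'M[C]_(2 ^ 3), Re (\tr (rho *m (A + B))) = Re (\tr (rho *m A)) + Re (\tr (rho *m B)).
  by move=> A B; rewrite mulmxDr mxtraceD ReD.
have h0 : Re (\tr (rho *m 0)) = 0 by rewrite mulmx0 mxtrace0.
rewrite (big_morph (fun A => Re (\tr (rho *m A))) hD h0); apply: eq_bigr => i _.
by rewrite -scalemxAr mxtraceZ ReMrc.
Qed.

Lemma Re2 (z : C) : Re (2%:R * z) = 2 * Re z.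
Proof. by rewrite mulr_natl mulr2n ReD mulr2n mulrDl !mul1r. Qed.

Lemma ReTr_s1 (a : R) (M : 'M[C]_(2 ^ 3)) :
  Re (\tr (rho *m (rc a *: 1%:M + 2%:R *: M))) = a + 2 * Re (\tr (rho *m M)).
Proof.
rewrite mulmxDr -!scalemxAr mulmx1 mxtraceD !mxtraceZ ReD ReMrc htr mulr1.
by rewrite Re2.
Qed.

Lemma beta_ub (x : nat -> R) : (forall n, Re (\tr (rho *m Sn R n)) = x n) ->
  \sum_(k < 7) x k ^+ 2 <= 2.
Proof.
move=> hx.
set s := \sum_(k < 7) x k ^+ 2.
have hH : Re (\tr (rho *m H x)) = s.
  by rewrite /H ReTr_lin; apply: eq_bigr => k _; rewrite hx expr2.
have VI := fun M (hM : adjmx M = M) => @var_ineq R _ rho M drho hM.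
have v1 := VI _ (H_herm _ x); rewrite hH I1 ReTr_s1 -/s in v1.
set nN := Re (\tr (rho *m N x)) in v1.
have v2 := VI _ (N_herm _ x); rewrite -/nN I2 ReTr_s1 ReTrZ in v2.
set kK := Re (\tr (rho *m Km x)) in v2.
have v3 := VI _ (Km_herm _ x); rewrite -/kK I3 ReTrZ mulmx1 htr mulr1 in v3.
have es : s = x 0 ^+ 2 + x 1 ^+ 2 + x 2 ^+ 2 + x 3 ^+ 2 + x 4 ^+ 2 + x 5 ^+ 2 + x 6 ^+ 2.
  by rewrite /s (sum7 _ (fun k => x k ^+ 2)).
rewrite (sum7 _ (fun e => (x (ea e) * x (eb e)) ^+ 2)) /= in v2.
rewrite (sum3 _ (fun a => zv _ x a ^+ 2)) /zv /= in v3.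
have := @polyU R (x 0 ^+ 2) (x 1 ^+ 2) (x 2 ^+ 2) (x 3 ^+ 2) (x 4 ^+ 2) (x 5 ^+ 2) (x 6 ^+ 2)
   (x 2 * x 5) kK (sqr_ge0 _) (sqr_ge0 _) (sqr_ge0 _) (sqr_ge0 _) (sqr_ge0 _) (sqr_ge0 _) (sqr_ge0 _).
move=> /(_ (exprMn _ _ _)).
have hk : kK ^+ 2 <= x 1 ^+ 2 * x 4 ^+ 2 + x 3 ^+ 2 * x 4 ^+ 2 + x 3 ^+ 2 * x 6 ^+ 2.
  by move: v3; rewrite !exprMn.
move=> /(_ hk); rewrite -es => hp.
have s0 : 0 <= s by rewrite /s; apply: sumr_ge0 => k _; exact: sqr_ge0.
have hn : 4 * nN ^+ 2 <= s ^+ 2.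
  apply: le_trans hp; rewrite ler_pM2l ?ltr0n //.
  apply: le_trans v2 _; rewrite le_eqVlt; apply/orP; left; apply/eqP.
  rewrite !exprMn; ring.
have h2 : 2 * nN <= s by nra.
nra.
Qed.
End Main2.



Section Fin.
Variable R : realType.
Local Notation C := R[i].
Local Notation Re := complex.Re.

Definition rho0 : 'M[C]_(2 ^ 3) := delta_mx ord0 ord0.

Lemma rho0_density : density rho0.
Proof.
split.
- apply/matrixP => i j; rewrite !mxE rmorph_nat andbC.
  by [].
- move=> v.
  rewrite /rho0 -(mul_delta_mx (0 : 'I_1)) !mulmxA -colE -mulmxA -rowE.
  rewrite !mxE big_ord1 !mxE.
  by rewrite mulrC mul_conjC_ge0.
- rewrite /rho0 /mxtrace (bigD1 ord0) //= big1 ?addr0.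
    by rewrite mxE !eqxx.
  by move=> i /negbTE hi; rewrite mxE hi.
Qed.

Lemma tr_rho0 (A : 'M[C]_(2 ^ 3)) : \tr (rho0 *m A) = A ord0 ord0.
Proof.
rewrite /rho0 -(mul_delta_mx (0 : 'I_1)) -mulmxA mxtrace_mulC -rowE.
by rewrite trace_mx11 -colE !mxE.
Qed.

Lemma ps00 (s : 3.-tuple pauli) : pauli_string R s ord0 ord0 =
  pauli_mx R (tnth s ord0) ord0 ord0 * (pauli_mx R (tnth s (lift ord0 ord0)) ord0 ord0 *
   pauli_mx R (tnth s (lift ord0 (lift ord0 ord0))) ord0 ord0).
Proof. by rewrite ps_T3 mxE !bitkE /=. Qed.

Lemma Sn00 k : (k < 7)%N -> Sn R k ord0 ord0 = if (k == 0)%N || (k == 2)%N then 1 else 0.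
Proof.
rewrite /Sn ps00.
case: k => [|[|[|[|[|[|[|//]]]]]]] _ /=; rewrite !mxE /=;
  by rewrite ?mulr1 ?mul0r ?mulr0.
Qed.

Lemma val_rho0 : \sum_(i < 7) 1 * (Re (\tr (rho0 *m pauli_string R (S7 i)))) ^+ 2 = 2.
Proof.
rewrite (sum7 _ (fun k => 1 * (Re (\tr (rho0 *m Sn R k))) ^+ 2)).
rewrite !tr_rho0 !Sn00 //=.
ring.
Qed.

Lemma no_indep3 (i j k : 'I_7) : i != j -> j != k -> k != i -> G7 i j || G7 j k || G7 k i.
Proof.
by case: i => [[|[|[|[|[|[|[|//]]]]]]] ?]; case: j => [[|[|[|[|[|[|[|//]]]]]]] ?];
  case: k => [[|[|[|[|[|[|[|//]]]]]]] ?].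
Qed.

Lemma indep_card (A : {set 'I_7}) : indep G7 A -> (#|A| <= 2)%N.
Proof.
move=> /forallP hA; rewrite leqNgt; apply/negP => /card_gt2P [a [b [c [[ha hb hc] [hab hbc hca]]]]].
have Hn : forall u v, u \in A -> v \in A -> G7 u v = false.
  move=> u v hu hv; move: (hA u); rewrite hu /= => /forallP /(_ v); rewrite hv /=.
  by move/negbTE.
move: (@no_indep3 a b c hab hbc hca); by rewrite !Hn.
Qed.

Definition A02 : {set 'I_7} := [set (@Ordinal 7 0 isT); (@Ordinal 7 2 isT)].

Lemma A02_indep : indep G7 A02.
Proof.
apply/forallP => i; apply/implyP; rewrite !inE => /orP [] /eqP ->;
  apply/forallP => j; apply/implyP; rewrite !inE => /orP [] /eqP -> //.
Qed.

Lemma alpha7 : alpha G7 (fun _ => (1 : R)) = 2.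
Proof.
rewrite /alpha; apply/eqP; rewrite eq_le; apply/andP; split.
  apply: (big_ind (fun v : R => v <= 2)) => //.
    by move=> a b ha hb; rewrite ge_max ha hb.
  move=> A hA; rewrite sumr_const.
  have := @indep_card A hA; rewrite -(ler_nat R) => h.
  exact: h.
rewrite (bigD1 A02) ?A02_indep //= le_max; apply/orP; left.
by rewrite sumr_const cards2.
Qed.
End Fin.

Theorem mainTheorem15 (R : realType) :
  realizes R G7 S7 /\
  beta S7 (fun _ => (1 : R)) = 2 /\
  alpha G7 (fun _ => (1 : R)) = 2.
Proof.
split; first exact: real7.
split; last exact: alpha7.
rewrite /beta.
set E := (fun x : R => _).
have ub : ubound E 2.
  move=> y [rho [drho ->]].
  under eq_bigr do rewrite mul1r.
  exact: (@beta_ub R rho drho (fun n => complex.Re (\tr (rho *m Sn R n))) (fun n => erefl)).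
have E2 : E 2.
  by exists (rho0 R); split; [exact: rho0_density | rewrite val_rho0].
apply/eqP; rewrite eq_le; apply/andP; split.
  by apply: ge_sup; [exists 2 | exact: ub].
by apply: sup_upper_bound => //; split; exists 2.
Qed.
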